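(* Consider the following slotted system. There are $N\ge2$ users and slots $t=1,\dots,T$. In each slot the BS schedules one user by an arbitrary (possibly randomized) scheduling algorithm. An adversary uses a blocking matrix $\sigma\in\{0,1\}^{N\times T}$, where $\sigma_i(t)=0$ means user $i$ is blocked in slot $t$. Feasibility means $\sum_{i,t}(1-\sigma_i(t))\le\alpha T$ and at most one user is blocked per slot, where $0<\alpha<1$ and $\alpha T\in\mathbb Z$. Ages satisfy $a_i(1)=1$, $a_i(t+1)=1$ if user $i$ is scheduled and not blocked in slot $t$, and $a_i(t+1)=a_i(t)+1$ otherwise. The average age is $\Delta=\frac1T\sum_{t=1}^T\frac1N\sum_i\mathbb E[a_i(t)]$. Then for every scheduling algorithm there exists a feasible blocking matrix under which $\Delta\ge\frac{T\alpha^2}{2N}$. *)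

(* Defs.v *)
From mathcomp Require Import all_boot all_order all_algebra.
Set Implicit Arguments. Unset Strict Implicit. Unset Printing Implicit Defensive.
Import Order.TTheory GRing.Theory Num.Theory.
Local Open Scope ring_scope.

Section Model.
Variables (R : realFieldType) (N T : nat).

(* Blocking matrix: sigma i t = false means user i is blocked in slot t
   (slots 1..T are represented by the ordinals 0..T-1). *)
Definition blocking := 'I_N -> 'I_T -> bool.

Definition feasible (alpha : R) (sigma : blocking) : Prop :=
  ((\sum_(i < N) \sum_(t < T) (~~ sigma i t : nat))%N%:R <= alpha * T%:R)
  /\ forall t : 'I_T, (#|[set i : 'I_N | ~~ sigma i t]| <= 1)%N.

(* A general (possibly randomized, adaptive) scheduling algorithm, given as a
   behavioural strategy: after observing the history of (scheduled user,
   success/failure feedback) pairs of past slots, it schedules user u with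
   probability q h u. *)
Definition history := seq ('I_N * bool).
Definition scheduler := history -> 'I_N -> R.

Definition valid_scheduler (q : scheduler) : Prop :=
  (forall h u, 0 <= q h u) /\ (forall h, \sum_(u < N) q h u = 1).

Definition age_update (a : 'I_N -> nat) (u : 'I_N) (succ : bool) : 'I_N -> nat :=
  fun i => if (i == u) && succ then 1%N else (a i).+1.

(* Expected sum over the remaining slots s of (1/N) sum_i a_i(s),
   given the current ages a and history h. *)
Fixpoint exp_cost (q : scheduler) (sigma : blocking) (s : seq 'I_T)
    (h : history) (a : 'I_N -> nat) : R :=
  match s with
  | [::] => 0
  | t :: s' =>
      (\sum_(i < N) (a i)%:R) / N%:R +
      \sum_(u < N) q h u *
        exp_cost q sigma s' (rcons h (u, sigma u t)) (age_update a u (sigma u t))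
  end.

Definition avg_age (q : scheduler) (sigma : blocking) : R :=
  exp_cost q sigma (enum 'I_T) [::] (fun _ => 1%N) / T%:R.

End Model.

(* Main.v *)
Require Import Defs.
From mathcomp Require Import all_boot all_order all_algebra.
From mathcomp Require Import ring lra zify.
Import Order.TTheory GRing.Theory Num.Theory.
Local Open Scope ring_scope.

Lemma exp_cost_ge0 (R : realFieldType) (N T : nat) (q : scheduler R N)
  (hq : valid_scheduler q) (sigma : blocking N T) :
  forall s h a, 0 <= exp_cost q sigma s h a.
Proof.
case: hq => hq0 hq1.
elim=> [|t s IH] h a /=; first by [].
apply: addr_ge0.
  by apply: divr_ge0; [apply: sumr_ge0 => i _; apply: ler0n|apply: ler0n].
by apply: sumr_ge0 => u _; apply: mulr_ge0.
Qed.

Fixpoint lbn (R : realFieldType) (N k : nat) (l : seq nat) (m : nat) : R :=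
  match l with
  | [::] => 0
  | t :: l' => if (k <= t)%N then 0 else m%:R / N%:R + lbn R N k l' m.+1
  end.

Lemma lb_le (R : realFieldType) (N T k : nat) (i0 : 'I_N) (q : scheduler R N)
  (hq : valid_scheduler q) (sigma : blocking N T)
  (hs : forall t, sigma i0 t = (k <= val t)%N) :
  forall s h a, lbn R N k (map val s) (a i0) <= exp_cost q sigma s h a.
Proof.
have hN : (0 < N)%N := leq_ltn_trans (leq0n _) (ltn_ord i0).
have := hq; case=> hq0 hq1.
elim=> [|t s IH] h a /=; first by [].
case: ifP => hk; first by have := @exp_cost_ge0 R N T q hq sigma (t :: s) h a.
apply: lerD.
  apply: ler_pM; [exact: ler0n|by rewrite invr_ge0 ler0n| |by []].
  rewrite -natr_sum ler_nat (bigD1 i0) //=; exact: leq_addr.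
have -> : lbn R N k [seq val i | i <- s] (a i0).+1 =
   \sum_(u < N) q h u * lbn R N k [seq val i | i <- s] (a i0).+1.
  by rewrite -mulr_suml hq1 mul1r.
apply: ler_sum => u _; apply: ler_wpM2l => //.
have E : age_update a u (sigma u t) i0 = (a i0).+1.
  rewrite /age_update; case: (i0 =P u) => [<-|//]; by rewrite hs hk.
by have := IH (rcons h (u, sigma u t)) (age_update a u (sigma u t)); rewrite E.
Qed.

Lemma lbn_iota (R : realFieldType) (N k : nat) (hN : (0 < N)%N) :
  forall n b m, (k <= b + n)%N -> (b <= k)%N ->
  lbn R N k (iota b n) m * (2 * N%:R) + (k - b)%:R
    = ((k - b) * (2 * m + (k - b)))%:R.
Proof.
elim=> [|n IH] b m h1 h2 /=.
  have -> : (k - b = 0)%N by lia.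
  by rewrite mul0n mul0r addr0.
case: leqP => hk.
  have -> : (k - b = 0)%N by lia.
  by rewrite mul0n mul0r addr0.
have := IH b.+1 m.+1 ltac:(lia) ltac:(lia).
have -> : (k - b = (k - b.+1).+1)%N by lia.
set d := (k - b.+1)%N => E.
have HN : (N%:R : R) != 0 by rewrite pnatr_eq0 -lt0n.
move: E; set L := lbn R N k (iota b.+1 n) m.+1 => E.
have E2 : L * (2 * N%:R) = (d * (2 * m.+1 + d))%:R - d%:R by rewrite -E addrK.
rewrite mulrDl E2 !natrM !natrD !natrM.
rewrite -!natr1.
field; exact: HN.
Qed.

Theorem lemma2 (R : realFieldType) (N T : nat) (alpha : R)
  (hN : (2 <= N)%N) (ha0 : 0 < alpha) (ha1 : alpha < 1)
  (haT : exists k : nat, alpha * T%:R = k%:R)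
  (q : scheduler R N) (hq : valid_scheduler q) :
  exists sigma : blocking N T,
    feasible alpha sigma /\
    T%:R * alpha ^+ 2 / (2 * N%:R) <= avg_age q sigma.
Proof.
case: haT => k hk.
have hN0 : (0 < N)%N by lia.
have hkT : (k <= T)%N.
  by rewrite -(ler_nat R) -hk ler_piMl // ?ler0n // ltW.
pose i0 : 'I_N := Ordinal hN0.
pose sigma : blocking N T := fun i t => ~~ ((i == i0) && (val t < k)%N).
exists sigma.
split; first split.
- rewrite hk ler_nat (bigD1 i0) //=.
  rewrite [X in (_ + X)%N]big1 ?addn0; last first.
    by move=> i hi; apply: big1 => t _; rewrite /sigma (negbTE hi).
  rewrite /sigma eqxx /=.
  under eq_bigr => t _ do rewrite negbK.
  rewrite -big_mkcond /= -(big_ord_widen T (fun _ => 1%N)) //.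
  by rewrite sum1_card card_ord.
- move=> t; apply: (leq_trans (subset_leq_card (B := [set i0]) _)).
    by apply/subsetP => i; rewrite !inE /sigma negbK => /andP [].
  by rewrite cards1.
have hs : forall t, sigma i0 t = (k <= val t)%N by move=> t; rewrite /sigma eqxx /= -leqNgt.
have L := @lb_le R N T k i0 q hq sigma hs (enum 'I_T) [::] (fun _ => 1%N).
rewrite val_enum_ord /= in L.
have E := @lbn_iota R N k hN0 T 0%N 1%N ltac:(lia) ltac:(lia).
rewrite subn0 in E.
rewrite /avg_age.
case: (posnP T) => [T0|Tpos].
  have -> : (T%:R : R) = 0 by rewrite T0.
  by rewrite !mul0r invr0 mulr0.
have HT : (0 : R) < T%:R by rewrite ltr0n.
have HN : (0 : R) < N%:R by rewrite ltr0n.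
rewrite ler_pdivlMr //.
apply: le_trans L.
have H2 : 0 < 2 * (N%:R : R) by rewrite mulr_gt0.
rewrite mulrAC ler_pdivrMr //.
have -> : T%:R * alpha ^+ 2 * T%:R = (k * k)%:R :> R by rewrite natrM -hk; ring.
have : ((k * k)%:R : R) <= (k * (2 * 1 + k))%:R - k%:R.
  rewrite -natrB; last by lia.
  rewrite ler_nat; lia.
by rewrite -E addrK.
Qed.
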